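(* Let $\mathcal{A}=(\Sigma,Q,\Delta,I,F)$ be a trim automaton and $m=|\Delta|$. There exists a regular expression $R$ such that $Gl(R)$ is a topological coding of $\mathcal{A}$. Moreover, the size of $R$ is in $O(m^2)$, $R$ contains exactly one Kleene star, and the number of transitions of $Gl(R)$ is in $O(m^2)$.
   Context: An automaton $(\Sigma,Q,\Delta,I,F)$ has $\Delta\subseteq Q\times\Sigma\times Q$; it is trim if every state is reachable from an initial state and co-reachable to a final state. A computation is an alternating sequence of states and transitions $(q_0,\delta_1,q_1,\dots,\delta_k,q_k)$ with $\delta_j=(q_{j-1},a_j,q_j)$; source $q_0$, target $q_k$, label $a_1\cdots a_k$; a state is internal if it occurs at a position other than first and last. Regular expressions: $R::=\varepsilon\mid a\mid R^*\mid R\cdot R\mid R+R$. A linearisation $R'$ replaces each atom occurrence by a distinct fresh position from $\Gamma$, with $\overline\alpha$ the original letter; $Gl(R)$ is the trim part of $(\Sigma,\{i\}\uplus\Gamma,\Delta',\{i\},F')$ with $\Delta'=\{(\alpha,\overline\beta,\beta):\exists u,v,\ u\alpha\beta v\in L(R')\}\cup\{(i,\overline\alpha,\alpha):\exists u,\ \alpha u\in L(R')\}$, $F'=\{\alpha:\exists u,\ u\alpha\in L(R')\}\cup(\{i\}$ if $\varepsilon\in L(R'))$. Topological coding: $\mathcal{B}=(\Sigma_\mathcal{B},Q_\mathcal{B},\Delta_\mathcal{B},I_\mathcal{B},F_\mathcal{B})$ is a topological coding of $\mathcal{A}=(\Sigma_\mathcal{A},Q_\mathcal{A},\Delta_\mathcal{A},I_\mathcal{A},F_\mathcal{A})$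 if there exist words $u_i,u_f\in\Sigma_\mathcal{B}^*$, an injective $\lambda:\Sigma_\mathcal{A}\to\Sigma_\mathcal{B}^+$ and an injective $\nu:Q_\mathcal{A}\to Q_\mathcal{B}$ such that, with $W^{\mathrm{init}}$ = computations of $\mathcal{B}$ with source in $I_\mathcal{B}$ and label $u_i$, $W^{\mathrm{trans}}$ = computations with source in $\mathrm{im}(\nu)$ and label in $\mathrm{im}(\lambda)$, $W^{\mathrm{final}}$ = computations with source in $\mathrm{im}(\nu)$ and label $u_f$, there exist bijections $\eta_i:I_\mathcal{A}\to W^{\mathrm{init}}$ (with $\eta_i(s)$ ending in $\nu(s)$ and no state at a non-last position of any $\eta_i(s)$ in $\mathrm{im}(\nu)$), $\eta:\Delta_\mathcal{A}\to W^{\mathrm{trans}}$ (with $\eta((s,a,t))$ starting in $\nu(s)$, labelled $\lambda(a)$, ending in $\nu(t)$, with no internal state in $\mathrm{im}(\nu)$), and $\eta_f:F_\mathcal{A}\to W^{\mathrm{final}}$ (with $\eta_f(s)$ ending in $F_\mathcal{B}$ and no state at a non-first position of any $\eta_f(s)$ in $\mathrm{im}(\nu)$), such that any two computations in $\mathrm{im}(\eta_i)\cup\mathrm{im}(\eta)\cup\mathrm{im}(\eta_f)$ sharing a transition or an internal state are equal. *)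

(* Defs.v *)
From HB Require Import structures.
From mathcomp Require Import all_boot.
From mathcomp Require Import boolp.
Set Implicit Arguments. Unset Strict Implicit. Unset Printing Implicit Defensive.

Inductive regex (T : Type) : Type :=
| Eps : regex T
| Atom : T -> regex T
| Star : regex T -> regex T
| Cat : regex T -> regex T -> regex T
| Alt : regex T -> regex T -> regex T.
Arguments Eps {T}.

Inductive matches {T : Type} : regex T -> seq T -> Prop :=
| m_eps : matches Eps [::]
| m_atom a : matches (Atom a) [:: a]
| m_star0 r : matches (Star r) [::]
| m_starS r u v : matches r u -> matches (Star r) v -> matches (Star r) (u ++ v)
| m_cat r1 r2 u v : matches r1 u -> matches r2 v -> matches (Cat r1 r2) (u ++ v)
| m_altl r1 r2 u : matches r1 u -> matches (Alt r1 r2) u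
| m_altr r1 r2 u : matches r2 u -> matches (Alt r1 r2) u.

Fixpoint rsize {T} (r : regex T) : nat :=
  match r with
  | Eps | Atom _ => 1
  | Star r => (rsize r).+1
  | Cat r1 r2 | Alt r1 r2 => (rsize r1 + rsize r2).+1
  end.

Fixpoint nstars {T} (r : regex T) : nat :=
  match r with
  | Eps | Atom _ => 0
  | Star r => (nstars r).+1
  | Cat r1 r2 | Alt r1 r2 => nstars r1 + nstars r2
  end.

Fixpoint atoms {T} (r : regex T) : seq T :=
  match r with
  | Eps => [::]
  | Atom a => [:: a]
  | Star r => atoms r
  | Cat r1 r2 | Alt r1 r2 => atoms r1 ++ atoms r2
  end.

Fixpoint lin_from {T} (n : nat) (r : regex T) : regex nat :=
  match r with
  | Eps => Eps
  | Atom _ => Atom n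
  | Star r => Star (lin_from n r)
  | Cat r1 r2 => Cat (lin_from n r1) (lin_from (n + size (atoms r1)) r2)
  | Alt r1 r2 => Alt (lin_from n r1) (lin_from (n + size (atoms r1)) r2)
  end.
Definition linearise {T} (r : regex T) : regex nat := lin_from 0 r.

Record automaton (S Q : finType) := Automaton {
  trans : {set Q * S * Q};
  init : {set Q};
  final : {set Q} }.

Section Automata.
Variables (S Q : finType) (A : automaton S Q).

Definition aedge : rel Q := fun p q => [exists a : S, (p, a, q) \in trans A].
Definition reach (p q : Q) : bool := connect aedge p q.
Definition useful (q : Q) : bool :=
  [exists i in init A, reach i q] && [exists f in final A, reach q f].
Definition trim : Prop := forall q : Q, useful q.

Definition trim_state := {q : Q | useful q}.
Definition trim_part : automaton S trim_state :=
  Automaton [set t : trim_state * S * trim_state | (val t.1.1, t.1.2, val t.2) \in trans A]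
            [set q : trim_state | val q \in init A]
            [set q : trim_state | val q \in final A].
End Automata.

Section Glushkov.
Variables (S : finType) (r : regex S).

Definition gl_pos := 'I_(size (atoms r)).
Definition gl_bar (al : gl_pos) : S := tnth (in_tuple (atoms r)) al.
Definition gl_first (b : gl_pos) : bool :=
  `[< exists u, matches (linearise r) (val b :: u) >].
Definition gl_last (al : gl_pos) : bool :=
  `[< exists u, matches (linearise r) (rcons u (val al)) >].
Definition gl_follow (al be : gl_pos) : bool :=
  `[< exists u v, matches (linearise r) (u ++ val al :: val be :: v) >].
Definition gl_eps : bool := `[< matches (linearise r) [::] >].

(* state None is the initial state i, Some al is the position al *)
Definition gl_full : automaton S (option gl_pos) :=
  Automaton
    [set t : option gl_pos * S * option gl_pos |
       match t with
       | (Some al, a, Some be) => (a == gl_bar be) && gl_follow al be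
       | (None, a, Some be) => (a == gl_bar be) && gl_first be
       | _ => false
       end]
    [set None]
    [set q : option gl_pos | match q with None => gl_eps | Some al => gl_last al end].

Definition Gl := trim_part gl_full.
End Glushkov.

(* a computation (q0, d1, q1, ..., dk, qk) is stored as (q0, [:: (a1,q1); ...; (ak,qk)]),
   with dj = (q_{j-1}, aj, qj) *)
Definition comp (S Q : Type) := (Q * seq (S * Q))%type.

Section Computations.
Variables (S Q : finType).
Implicit Types (c : comp S Q).

Fixpoint ctrans_from (p : Q) (s : seq (S * Q)) : seq (Q * S * Q) :=
  match s with
  | [::] => [::]
  | (a, q) :: s' => (p, a, q) :: ctrans_from q s'
  end.
Definition ctrans c := ctrans_from c.1 c.2.
Definition csrc c : Q := c.1.
Definition ctgt c : Q := last c.1 (map snd c.2).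
Definition clabel c : seq S := map fst c.2.
Definition is_comp (B : automaton S Q) c : Prop := all (fun t => t \in trans B) (ctrans c).
Definition cinternal c : seq Q := behead (belast c.1 (map snd c.2)).
Definition cnonlast c : seq Q := belast c.1 (map snd c.2).
Definition cnonfirst c : seq Q := map snd c.2.
End Computations.

Definition bij_on (D : finType) (X : {set D}) (W : Type) (P : W -> Prop) (f : D -> W) : Prop :=
  [/\ (forall x, x \in X -> P (f x)),
      {in X &, injective f} &
      (forall w, P w -> exists2 x, x \in X & f x = w)].

Definition topological_coding (SA QA SB QB : finType)
    (A : automaton SA QA) (B : automaton SB QB) : Prop :=
  exists (ui uf : seq SB) (lam : SA -> seq SB) (nu : QA -> QB),
    [/\ injective lam, (forall a, lam a != [::]) & injective nu] /\
    let inim (q : QB) := exists s, q = nu s in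
    let Winit (c : comp SB QB) := [/\ is_comp B c, csrc c \in init B & clabel c = ui] in
    let Wtrans (c : comp SB QB) :=
      [/\ is_comp B c, inim (csrc c) & exists a, clabel c = lam a] in
    let Wfinal (c : comp SB QB) := [/\ is_comp B c, inim (csrc c) & clabel c = uf] in
    exists (eta_i : QA -> comp SB QB) (eta : QA * SA * QA -> comp SB QB)
           (eta_f : QA -> comp SB QB),
      [/\ bij_on (init A) Winit eta_i,
          bij_on (trans A) Wtrans eta &
          bij_on (final A) Wfinal eta_f] /\
      [/\
          (forall s, s \in init A ->
             ctgt (eta_i s) = nu s /\
             (forall q, q \in cnonlast (eta_i s) -> ~ inim q)),
          (forall s a t, (s, a, t) \in trans A ->
             [/\ csrc (eta (s, a, t)) = nu s, clabel (eta (s, a, t)) = lam a,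
                 ctgt (eta (s, a, t)) = nu t &
                 (forall q, q \in cinternal (eta (s, a, t)) -> ~ inim q)]),
          (forall s, s \in final A ->
             ctgt (eta_f s) \in final B /\
             (forall q, q \in cnonfirst (eta_f s) -> ~ inim q)) &
          (let inimg (c : comp SB QB) :=
             (exists2 s, s \in init A & c = eta_i s) \/
             (exists2 d, d \in trans A & c = eta d) \/
             (exists2 s, s \in final A & c = eta_f s) in
           forall c1 c2, inimg c1 -> inimg c2 ->
             (exists t, t \in ctrans c1 /\ t \in ctrans c2) \/
             (exists q, q \in cinternal c1 /\ q \in cinternal c2) ->
             c1 = c2)].

(* Main.v *)
From HB Require Import structures.
From mathcomp Require Import all_boot.
From mathcomp Require Import boolp.
From mathcomp Require Import zify.
Require Import Defs.
Set Implicit Arguments. Unset Strict Implicit. Unset Printing Implicit Defensive.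

Section Gen.
Variable T : eqType.
Implicit Types (r : regex T) (x y : T) (u v w : seq T).

Fixpoint nullable r : bool := match r with
 | Eps => true | Atom _ => false | Star _ => true
 | Cat r1 r2 => nullable r1 && nullable r2
 | Alt r1 r2 => nullable r1 || nullable r2 end.
Fixpoint firsts r : seq T := match r with
 | Eps => [::] | Atom a => [:: a] | Star r => firsts r
 | Cat r1 r2 => firsts r1 ++ (if nullable r1 then firsts r2 else [::])
 | Alt r1 r2 => firsts r1 ++ firsts r2 end.
Fixpoint lasts r : seq T := match r with
 | Eps => [::] | Atom a => [:: a] | Star r => lasts r
 | Cat r1 r2 => lasts r2 ++ (if nullable r2 then lasts r1 else [::])
 | Alt r1 r2 => lasts r1 ++ lasts r2 end.
Fixpoint fol r (x y : T) : bool := match r with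
 | Eps | Atom _ => false
 | Star r => fol r x y || (x \in lasts r) && (y \in firsts r)
 | Cat r1 r2 => [|| fol r1 x y, fol r2 x y | (x \in lasts r1) && (y \in firsts r2)]
 | Alt r1 r2 => fol r1 x y || fol r2 x y end.

Lemma word_ex r : exists w, matches r w.
Proof.
elim: r => [|a|r _|r1 [w1 H1] r2 [w2 H2]|r1 [w1 H1] r2 _].
- by exists [::]; constructor.
- by exists [:: a]; constructor.
- by exists [::]; constructor.
- by exists (w1 ++ w2); constructor.
- by exists w1; constructor.
Qed.

Lemma nullableP r : matches r [::] <-> nullable r.
Proof.
split.
  suff Hg: forall w, matches r w -> w = [::] -> nullable r by move=> /Hg; apply.
  move=> w; elim => //= [r1 r2 u v _ IH1 _ IH2|r1 r2 u _ IH|r1 r2 u _ IH].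
  - by case: u IH1 => // IH1; case: v IH2 => // IH2 _; rewrite IH1 // IH2.
  - by move=> /IH ->.
  - by move=> /IH ->; rewrite orbT.
elim: r => [|a|r IH|r1 IH1 r2 IH2|r1 IH1 r2 IH2] //=.
- by constructor.
- by constructor.
- by case/andP=> /IH1 H1 /IH2 H2; exact: (m_cat H1 H2).
- by case/orP=> [/IH1|/IH2] H; constructor.
Qed.

Lemma firstsP r x : (exists u, matches r (x :: u)) <-> x \in firsts r.
Proof.
split.
  case=> u0 H0.
  suff Hg: forall w, matches r w -> forall u, w = x :: u -> x \in firsts r by apply: (Hg _ H0).
  move=> w; elim => //= [a u [-> _]|r1 u v _ IH1 _ IH2 u'|r1 r2 u v H1 IH1 _ IH2 u'|r1 r2 u _ IH u'|r1 r2 u _ IH u'].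
  - by rewrite inE.
  - by case: u IH1 => [|b u] IH1 /=; [apply: IH2|case=> Eb E; apply: (IH1 u); rewrite Eb].
  - case: u H1 IH1 => [|b u] H1 IH1 /=.
      by move=> E; rewrite (nullableP _).1 //= mem_cat (IH2 u') ?orbT.
    by case=> Eb E; rewrite mem_cat (IH1 u) // Eb.
  - by move=> E; rewrite mem_cat (IH u').
  - by move=> E; rewrite mem_cat (IH u') ?orbT.
elim: r => //= [a|r IH|r1 IH1 r2 IH2|r1 IH1 r2 IH2].
- by rewrite inE => /eqP ->; exists [::]; constructor.
- move=> /IH [u Hu]; exists u; have := m_starS Hu (m_star0 r); by rewrite cats0.
- rewrite mem_cat; case/orP.
    move=> /IH1 [u Hu]; have [w Hw] := word_ex r2; exists (u ++ w).
    exact: (m_cat Hu Hw).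
  case N: (nullable r1) => // /IH2 [u Hu]; exists u.
  exact: (m_cat ((nullableP r1).2 N) Hu).
- rewrite mem_cat; case/orP=> [/IH1|/IH2] [u Hu]; exists u; by constructor.
Qed.

Lemma lastsP r x : (exists u, matches r (rcons u x)) <-> x \in lasts r.
Proof.
split.
  case=> u0 H0.
  suff Hg: forall w, matches r w -> forall u, w = rcons u x -> x \in lasts r by apply: (Hg _ H0).
  move=> w; elim => [u|a u|r1 u|r1 u v _ IH1 _ IH2 u'|r1 r2 u v _ IH1 H2 IH2 u'|r1 r2 u _ IH u'|r1 r2 u _ IH u'] /=.
  - by case: u.
  - by case: u => [[->]|b [|c u]] //=; rewrite inE.
  - by case: u.
  - case/lastP: v IH2 => [|v b] IH2.
      by rewrite cats0 => E; apply: (IH1 u').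
    by rewrite -rcons_cat => /rcons_inj [E Eb]; apply: (IH2 v); rewrite Eb.
  - case/lastP: v H2 IH2 => [|v b] H2 IH2.
      by rewrite cats0 => E; rewrite mem_cat (nullableP _).1 //= (IH1 u') ?orbT.
    by rewrite -rcons_cat => /rcons_inj [E Eb]; rewrite mem_cat (IH2 v) // Eb.
  - by move=> E; rewrite mem_cat (IH u').
  - by move=> E; rewrite mem_cat (IH u') ?orbT.
elim: r => //= [a|r IH|r1 IH1 r2 IH2|r1 IH1 r2 IH2].
- by rewrite inE => /eqP ->; exists [::]; constructor.
- move=> /IH [u Hu]; exists u; have := m_starS Hu (m_star0 r); by rewrite cats0.
- rewrite mem_cat; case/orP.
    move=> /IH2 [u Hu]; have [w Hw] := word_ex r1; exists (w ++ u).
    by rewrite rcons_cat; exact: (m_cat Hw Hu).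
  case N: (nullable r2) => // /IH1 [u Hu]; exists u.
  have := m_cat Hu ((nullableP r2).2 N); by rewrite cats0.
- rewrite mem_cat; case/orP=> [/IH1|/IH2] [u Hu]; exists u; by constructor.
Qed.

Lemma split3 u1 v1 u x y v : u1 ++ v1 = u ++ x :: y :: v ->
  [\/ exists v', u1 = u ++ x :: y :: v',
      exists u', v1 = u' ++ x :: y :: v |
      u1 = rcons u x /\ v1 = y :: v].
Proof.
move: u; elim: u1 => [|a s IH] u /=.
  by move=> ->; apply: Or32; exists u.
case: u => [|b u] /=.
  case=> -> E; move: E; case: s IH => [|c s'] IH /=.
    by move=> ->; apply: Or33.
  by case=> -> E; apply: Or31; exists s'.
case=> -> /IH [[v' ->]|[u' ->]|[-> ->]].
- by apply: Or31; exists v'.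
- by apply: Or32; exists u'.
- by apply: Or33.
Qed.

Lemma folP r x y : (exists u v, matches r (u ++ x :: y :: v)) <-> fol r x y.
Proof.
split.
  case=> u0 [v0 H0].
  suff Hg: forall w, matches r w -> forall u v, w = u ++ x :: y :: v -> fol r x y by apply: (Hg _ H0).
  move=> w; elim => [u v|a u v|r1 u v|r1 u v H1 IH1 H2 IH2 u' v'|r1 r2 u v H1 IH1 H2 IH2 u' v'|r1 r2 u _ IH u' v'|r1 r2 u _ IH u' v'] /=.
  - by case: u.
  - by case: u => [|b [|c u]].
  - by case: u.
  - case/split3 => [[w' E]|[w' E]|[E1 E2]].
    + by rewrite (IH1 _ _ E).
    + by apply: (IH2 _ _ E).
    + rewrite E1 in H1; rewrite E2 in H2.
      apply/orP; right; apply/andP; split; first by apply/(lastsP _ _).1; exists u'.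
      by apply: ((firstsP (Star r1) y).1); exists v'.
  - case/split3 => [[w' E]|[w' E]|[E1 E2]].
    + by rewrite (IH1 _ _ E).
    + by rewrite (IH2 _ _ E) orbT.
    + rewrite E1 in H1; rewrite E2 in H2.
      apply/or3P; apply: Or33; apply/andP; split; first by apply/(lastsP _ _).1; exists u'.
      by apply: ((firstsP _ y).1); exists v'.
  - by move=> E; rewrite (IH _ _ E).
  - by move=> E; rewrite (IH _ _ E) orbT.
elim: r => //= [r IH|r1 IH1 r2 IH2|r1 IH1 r2 IH2].
- case/orP.
    move=> /IH [u [v Hv]]; exists u, v; have := m_starS Hv (m_star0 r); by rewrite cats0.
  case/andP=> /lastsP [u Hu] /firstsP [v Hv]; exists u, v.
  have := m_starS Hu (m_starS Hv (m_star0 r)); by rewrite cats0 cat_rcons.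
- case/or3P.
  + move=> /IH1 [u [v Hv]]; have [w Hw] := word_ex r2; exists u, (v ++ w).
    have := m_cat Hv Hw; by rewrite -catA.
  + move=> /IH2 [u [v Hv]]; have [w Hw] := word_ex r1; exists (w ++ u), v.
    have := m_cat Hw Hv; by rewrite catA.
  + case/andP=> /lastsP [u Hu] /firstsP [v Hv]; exists u, v.
    have := m_cat Hu Hv; by rewrite cat_rcons.
- case/orP=> [/IH1|/IH2] [u [v Hv]]; exists u, v; by constructor.
Qed.

Lemma firsts_atoms r : {subset firsts r <= atoms r}.
Proof.
elim: r => [|a|r IH|r1 IH1 r2 IH2|r1 IH1 r2 IH2] z //=.
- exact: IH.
- rewrite !mem_cat; case/orP=> [/IH1 ->//|]; case: nullable => // /IH2 ->; by rewrite orbT.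
- rewrite !mem_cat; case/orP=> [/IH1 ->//|/IH2 ->]; by rewrite orbT.
Qed.

Lemma lasts_atoms r : {subset lasts r <= atoms r}.
Proof.
elim: r => [|a|r IH|r1 IH1 r2 IH2|r1 IH1 r2 IH2] z //=.
- exact: IH.
- rewrite !mem_cat; case/orP=> [/IH2 ->//|]; first by rewrite orbT.
  case: nullable => // /IH1 ->//.
- rewrite !mem_cat; case/orP=> [/IH1 ->//|/IH2 ->]; by rewrite orbT.
Qed.

Lemma fol_atoms r x y : fol r x y -> (x \in atoms r) && (y \in atoms r).
Proof.
elim: r => [|a|r IH|r1 IH1 r2 IH2|r1 IH1 r2 IH2] //=.
- by case/orP=> [/IH //|/andP [/lasts_atoms -> /firsts_atoms ->]].
- rewrite !mem_cat; case/or3P=> [/IH1/andP[->->]//|/IH2/andP[->->]|/andP [/lasts_atoms -> /firsts_atoms ->]];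
  by rewrite ?orbT.
- rewrite !mem_cat; case/orP=> [/IH1/andP[->->]//|/IH2/andP[->->]]; by rewrite ?orbT.
Qed.

End Gen.

Fixpoint rmap (A B : Type) (f : A -> B) (r : regex A) : regex B :=
  match r with
  | Eps => Eps
  | Atom a => Atom (f a)
  | Star r => Star (rmap f r)
  | Cat r1 r2 => Cat (rmap f r1) (rmap f r2)
  | Alt r1 r2 => Alt (rmap f r1) (rmap f r2)
  end.

Fixpoint neps T (r : regex T) : nat :=
  match r with
  | Eps => 1 | Atom _ => 0 | Star r => neps r
  | Cat r1 r2 | Alt r1 r2 => neps r1 + neps r2
  end.

Fixpoint bigAlt T (l : seq (regex T)) : regex T :=
  match l with
  | [::] => Eps
  | r :: l' => if l' is [::] then r else Alt r (bigAlt l')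
  end.

Fixpoint chainF T (C : nat -> T) (a L : nat) : regex T :=
  match L with
  | 0 => Atom (C a)
  | L'.+1 => Cat (Atom (C a)) (chainF C a.+1 L')
  end.

Lemma atoms_rmapT (A B : Type) (f : A -> B) (r : regex A) : atoms (rmap f r) = map f (atoms r).
Proof. by elim: r => //= [r1 -> r2 ->|r1 -> r2 ->]; rewrite map_cat. Qed.

Section Gen2.
Variables A B : eqType.
Implicit Types (r : regex A).

Lemma atoms_rmap (f : A -> B) r : atoms (rmap f r) = map f (atoms r).
Proof. by elim: r => //= [r1 -> r2 ->|r1 -> r2 ->]; rewrite map_cat. Qed.
Lemma nullable_rmap (f : A -> B) r : nullable (rmap f r) = nullable r.
Proof. by elim: r => //= [r1 -> r2 ->|r1 -> r2 ->]. Qed.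
Lemma firsts_rmap (f : A -> B) r : firsts (rmap f r) = map f (firsts r).
Proof.
elim: r => //= [r1 -> r2 ->|r1 -> r2 ->]; rewrite ?map_cat ?nullable_rmap //.
by case: nullable.
Qed.
Lemma lasts_rmap (f : A -> B) r : lasts (rmap f r) = map f (lasts r).
Proof.
elim: r => //= [r1 -> r2 ->|r1 -> r2 ->]; rewrite ?map_cat ?nullable_rmap //.
by case: nullable.
Qed.
Lemma rsize_rmap (f : A -> B) r : rsize (rmap f r) = rsize r.
Proof. by elim: r => //= [r1 ->|r1 -> r2 ->|r1 -> r2 ->]. Qed.
Lemma nstars_rmap (f : A -> B) r : nstars (rmap f r) = nstars r.
Proof. by elim: r => //= [r1 ->|r1 -> r2 ->|r1 -> r2 ->]. Qed.

Lemma eq_in_rmap (B' : Type) (f g : A -> B') r : {in atoms r, f =1 g} -> rmap f r = rmap g r.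
Proof.
elim: r => //= [a|r IH|r1 IH1 r2 IH2|r1 IH1 r2 IH2] E.
- by rewrite E // inE.
- by rewrite IH.
- by rewrite IH1 ?IH2 // => z Hz; apply: E; rewrite mem_cat Hz ?orbT.
- by rewrite IH1 ?IH2 // => z Hz; apply: E; rewrite mem_cat Hz ?orbT.
Qed.

Lemma lin_rmap (T : Type) (g : A -> T) r : uniq (atoms r) -> forall n,
  lin_from n (rmap g r) = rmap (fun x => n + index x (atoms r)) r.
Proof.
elim: r => //= [a _ n|r IH U n|r1 IH1 r2 IH2 U n|r1 IH1 r2 IH2 U n].
- by rewrite eqxx addn0.
- by rewrite IH.
- move: U; rewrite cat_uniq => /and3P [U1 D U2].
  rewrite IH1 // IH2 // atoms_rmapT size_map; congr Cat; apply: eq_in_rmap => z Hz.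
    by rewrite index_cat Hz.
  have Hz1 : z \notin atoms r1 by apply: contra D => Hz1; apply/hasP; exists z.
  by rewrite index_cat (negbTE Hz1) addnA.
- move: U; rewrite cat_uniq => /and3P [U1 D U2].
  rewrite IH1 // IH2 // atoms_rmapT size_map; congr Alt; apply: eq_in_rmap => z Hz.
    by rewrite index_cat Hz.
  have Hz1 : z \notin atoms r1 by apply: contra D => Hz1; apply/hasP; exists z.
  by rewrite index_cat (negbTE Hz1) addnA.
Qed.

Lemma mem_map_in (f : A -> B) (D : seq A) (l : seq A) x :
  {in D &, injective f} -> {subset l <= D} -> x \in D -> (f x \in map f l) = (x \in l).
Proof.
move=> inj sub xD; elim: l sub => //= z l IH sub.
rewrite !inE IH; last by move=> w wl; apply: sub; rewrite inE wl orbT.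
congr (_ || _); apply/eqP/eqP => [|->//]; apply: inj => //; apply: sub; exact: mem_head.
Qed.

Lemma fol_rmap (f : A -> B) (D : seq A) r x y :
  {in D &, injective f} -> {subset atoms r <= D} -> x \in D -> y \in D ->
  fol (rmap f r) (f x) (f y) = fol r x y.
Proof.
move=> inj + xD yD; elim: r => //= [r IH|r1 IH1 r2 IH2|r1 IH1 r2 IH2] sub.
- rewrite IH // lasts_rmap firsts_rmap !(mem_map_in inj) //.
  + by move=> z /firsts_atoms; apply: sub.
  + by move=> z /lasts_atoms; apply: sub.
- have s1 : {subset atoms r1 <= D} by move=> z zr; apply: sub; rewrite mem_cat zr.
  have s2 : {subset atoms r2 <= D} by move=> z zr; apply: sub; rewrite mem_cat zr orbT.
  rewrite IH1 // IH2 // lasts_rmap firsts_rmap !(mem_map_in inj) //.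
  + by move=> z /firsts_atoms; apply: s2.
  + by move=> z /lasts_atoms; apply: s1.
- have s1 : {subset atoms r1 <= D} by move=> z zr; apply: sub; rewrite mem_cat zr.
  have s2 : {subset atoms r2 <= D} by move=> z zr; apply: sub; rewrite mem_cat zr orbT.
  by rewrite IH1 // IH2.
Qed.

End Gen2.

Section Gen3.
Variable T : eqType.
Implicit Types (r : regex T) (l : seq (regex T)).

Lemma rsize_eq r : (rsize r).+1 = 2 * (size (atoms r) + neps r) + nstars r.
Proof.
elim: r => //= [r ->|r1 IH1 r2 IH2|r1 IH1 r2 IH2]; rewrite ?size_cat; try lia.
Qed.

Lemma firsts_bigAlt l : firsts (bigAlt l) = flatten (map (@firsts T) l).
Proof. elim: l => //= r [|r' l] IH /=; first by rewrite cats0. by rewrite IH. Qed.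
Lemma lasts_bigAlt l : lasts (bigAlt l) = flatten (map (@lasts T) l).
Proof. elim: l => //= r [|r' l] IH /=; first by rewrite cats0. by rewrite IH. Qed.
Lemma atoms_bigAlt l : atoms (bigAlt l) = flatten (map (@atoms T) l).
Proof. elim: l => //= r [|r' l] IH /=; first by rewrite cats0. by rewrite IH. Qed.
Lemma fol_bigAlt l x y : fol (bigAlt l) x y = has (fun r => fol r x y) l.
Proof. elim: l => //= r [|r' l] IH /=; first by rewrite orbF. by rewrite IH. Qed.
Lemma nullable_bigAlt l : nullable (bigAlt l) = nilp l || has (@nullable T) l.
Proof. elim: l => //= r [|r' l] IH /=; first by rewrite orbF. by rewrite IH. Qed.
Lemma nstars_bigAlt l : nstars (bigAlt l) = sumn (map (@nstars T) l).
Proof. elim: l => //= r [|r' l] IH /=; first by rewrite addn0. by rewrite IH. Qed.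
Lemma neps_bigAlt l : neps (bigAlt l) = if nilp l then 1 else sumn (map (@neps T) l).
Proof. elim: l => //= r [|r' l] IH /=; first by rewrite addn0. by rewrite IH. Qed.

Lemma mem_flatten_map (U : Type) (f : U -> seq T) (l : seq U) x :
  (x \in flatten (map f l)) = has (fun u => x \in f u) l.
Proof. by elim: l => //= u l IH; rewrite mem_cat IH. Qed.

Variable C : nat -> T.
Lemma chain_nullable a L : nullable (chainF C a L) = false.
Proof. by elim: L a => //= L IH a; rewrite IH. Qed.
Lemma chain_firsts a L : firsts (chainF C a L) = [:: C a].
Proof. by case: L. Qed.
Lemma chain_lasts a L : lasts (chainF C a L) = [:: C (a + L)].
Proof.
elim: L a => /= [|L IH] a; first by rewrite addn0.
by rewrite IH chain_nullable cats0 addSnnS.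
Qed.
Lemma chain_atoms a L : atoms (chainF C a L) = map C (iota a L.+1).
Proof. by elim: L a => //= L IH a; rewrite IH. Qed.
Lemma chain_nstars a L : nstars (chainF C a L) = 0.
Proof. by elim: L a => //= L IH a; rewrite IH. Qed.
Lemma chain_neps a L : neps (chainF C a L) = 0.
Proof. by elim: L a => //= L IH a; rewrite IH. Qed.
Lemma chain_fol a L x y :
  fol (chainF C a L) x y = has (fun k => (x == C k) && (y == C k.+1)) (iota a L).
Proof.
elim: L a => //= L IH a; rewrite IH chain_firsts !inE.
by rewrite orbC.
Qed.
End Gen3.

Lemma uniq_flatten_own (U T : eqType) (f : U -> seq T) (own : T -> option U) l :
  uniq l -> (forall u, u \in l -> uniq (f u)) ->
  (forall u x, u \in l -> x \in f u -> own x = Some u) -> uniq (flatten (map f l)).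
Proof.
elim: l => //= u l IH /andP [ul Ul] Hu Ho.
rewrite cat_uniq Hu ?mem_head //= IH //; last first.
- by move=> v x vl; apply: Ho; rewrite inE vl orbT.
- by move=> v vl; apply: Hu; rewrite inE vl orbT.
rewrite andbT; apply/hasP => [[x]]; rewrite mem_flatten_map => /hasP [v vl xv] xu.
have := Ho _ _ (mem_head _ _) xu; rewrite (Ho v x) ?inE ?vl ?orbT // => [[Ev]].
by move: ul; rewrite -Ev vl.
Qed.

Section Constr.
Variables (S Q : finType) (A : automaton S Q).
Hypothesis trimA : trim A.

Local Notation D3 := (Q * S * Q)%type.
Local Notation Role := (Q + (D3 * nat) + (D3 * nat) + unit)%type.
Local Notation SB := (S + option bool)%type.

Definition H (t : Q) : Role := inl (inl (inl t)).
Definition X (d : D3) (k : nat) : Role := inl (inl (inr (d, k))).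
Definition W (d : D3) (k : nat) : Role := inl (inr (d, k)).
Definition Dl : Role := inr tt.

Definition cc : SB := inr None.
Definition hh : SB := inr (Some true).
Definition dl : SB := inr (Some false).

Definition letter (x : Role) : SB :=
  match x with
  | inl (inl (inl _)) => hh
  | inl (inl (inr (d, k))) => if k is 0 then inl d.1.2 else cc
  | inl (inr _) => cc
  | inr _ => dl
  end.

Definition ds : seq D3 := enum (trans A).
Definition m := size ds.
Definition idx (d : D3) := index d ds.
Definition Ld (d : D3) := m - idx d.

Definition Xc d := chainF (X d) 0 (Ld d).
Definition Wc d := chainF (W d) 0 (idx d).
Definition Pre t := bigAlt (map Wc [seq d <- ds | d.2 == t] ++
                           (if t \in init A then [:: Eps] else [::])).
Definition Gt t := bigAlt (map Xc [seq d <- ds | d.1.1 == t] ++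
                           (if t \in final A then [:: Eps] else [::])).
Definition Block t := Cat (Cat (Pre t) (Atom (H t))) (Gt t).
Definition E := bigAlt (map Block (enum Q)).
Definition R' := Cat (Star E) (Atom Dl).
Arguments R' : simpl never.

Lemma mem_ds d : (d \in ds) = (d \in trans A).
Proof. by rewrite /ds mem_enum. Qed.

Lemma trim_in t : t \notin init A -> exists2 d, d \in ds & d.2 = t.
Proof.
move=> Nt; have /andP [/existsP [i /andP [iI]]] := trimA t.
move=> /connectP [p Hp Et] _.
case/lastP: p Hp Et => [|p z] Hp Et; first by rewrite /= in Et; rewrite Et iI in Nt.
rewrite last_rcons in Et; subst z.
move: Hp; rewrite rcons_path => /andP [_ /existsP [a Ha]].
by exists (last i p, a, t); rewrite ?mem_ds.
Qed.

Lemma trim_out t : t \notin final A -> exists2 d, d \in ds & d.1.1 = t.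
Proof.
move=> Nt; have /andP [_ /existsP [f /andP [fF]]] := trimA t.
move=> /connectP [p Hp Et].
case: p Hp Et => [|z p] Hp Et; first by rewrite /= in Et; rewrite -Et fF in Nt.
move: Hp => /= /andP [/existsP [a Ha] _].
by exists (t, a, z); rewrite ?mem_ds.
Qed.

Lemma nullable_Pre t : nullable (Pre t) = (t \in init A).
Proof.
rewrite /Pre nullable_bigAlt has_cat.
have -> : has (@nullable _) (map Wc [seq d <- ds | d.2 == t]) = false.
  by elim: [seq d <- ds | d.2 == t] => //= d l ->; rewrite chain_nullable.
case It: (t \in init A) => /=; first by rewrite orbT.
rewrite cats0 orbF /nilp size_map size_eq0.
have [|d dd <-] := trim_in (t := t); first by rewrite It.
by apply/negbTE; rewrite -has_filter; apply/hasP; exists d => /=.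
Qed.

Lemma nullable_Gt t : nullable (Gt t) = (t \in final A).
Proof.
rewrite /Gt nullable_bigAlt has_cat.
have -> : has (@nullable _) (map Xc [seq d <- ds | d.1.1 == t]) = false.
  by elim: [seq d <- ds | d.1.1 == t] => //= d l ->; rewrite chain_nullable.
case It: (t \in final A) => /=; first by rewrite orbT.
rewrite cats0 orbF /nilp size_map size_eq0.
have [|d dd <-] := trim_out (t := t); first by rewrite It.
by apply/negbTE; rewrite -has_filter; apply/hasP; exists d => /=.
Qed.

Lemma flatten_single (U V : Type) (g : U -> V) (s : seq U) :
  flatten (map (fun x => [:: g x]) s) = map g s.
Proof. by elim: s => //= x s ->. Qed.

Lemma firsts_Pre t : firsts (Pre t) = [seq W d 0 | d <- [seq d <- ds | d.2 == t]].
Proof.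
rewrite /Pre firsts_bigAlt map_cat flatten_cat -map_comp.
rewrite (eq_map (g := fun d => [:: W d 0])); last by move=> d; rewrite /= chain_firsts.
by rewrite flatten_single; case: (t \in init A); rewrite /= cats0.
Qed.

Lemma lasts_Pre t : lasts (Pre t) = [seq W d (idx d) | d <- [seq d <- ds | d.2 == t]].
Proof.
rewrite /Pre lasts_bigAlt map_cat flatten_cat -map_comp.
rewrite (eq_map (g := fun d => [:: W d (idx d)])); last by move=> d; rewrite /= chain_lasts.
by rewrite flatten_single; case: (t \in init A); rewrite /= cats0.
Qed.

Lemma firsts_Gt t : firsts (Gt t) = [seq X d 0 | d <- [seq d <- ds | d.1.1 == t]].
Proof.
rewrite /Gt firsts_bigAlt map_cat flatten_cat -map_comp.
rewrite (eq_map (g := fun d => [:: X d 0])); last by move=> d; rewrite /= chain_firsts.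
by rewrite flatten_single; case: (t \in final A); rewrite /= cats0.
Qed.

Lemma lasts_Gt t : lasts (Gt t) = [seq X d (Ld d) | d <- [seq d <- ds | d.1.1 == t]].
Proof.
rewrite /Gt lasts_bigAlt map_cat flatten_cat -map_comp.
rewrite (eq_map (g := fun d => [:: X d (Ld d)])); last by move=> d; rewrite /= chain_lasts.
by rewrite flatten_single; case: (t \in final A); rewrite /= cats0.
Qed.

Lemma fol_Pre t x y : fol (Pre t) x y =
  has (fun d => has (fun k => (x == W d k) && (y == W d k.+1)) (iota 0 (idx d)))
      [seq d <- ds | d.2 == t].
Proof.
rewrite /Pre fol_bigAlt has_cat has_map.
rewrite (eq_has (a2 := fun d => has (fun k => (x == W d k) && (y == W d k.+1)) (iota 0 (idx d)))).
  by case: (t \in init A); rewrite /= orbF.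
by move=> d; rewrite /= chain_fol.
Qed.

Lemma fol_Gt t x y : fol (Gt t) x y =
  has (fun d => has (fun k => (x == X d k) && (y == X d k.+1)) (iota 0 (Ld d)))
      [seq d <- ds | d.1.1 == t].
Proof.
rewrite /Gt fol_bigAlt has_cat has_map.
rewrite (eq_has (a2 := fun d => has (fun k => (x == X d k) && (y == X d k.+1)) (iota 0 (Ld d)))).
  by case: (t \in final A); rewrite /= orbF.
by move=> d; rewrite /= chain_fol.
Qed.


Lemma firsts_Block t : firsts (Block t) =
  [seq W d 0 | d <- [seq d <- ds | d.2 == t]] ++ (if t \in init A then [:: H t] else [::]).
Proof. by rewrite /Block /= nullable_Pre firsts_Pre andbF cats0. Qed.

Lemma lasts_Block t : lasts (Block t) =
  [seq X d (Ld d) | d <- [seq d <- ds | d.1.1 == t]] ++ (if t \in final A then [:: H t] else [::]).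
Proof. by rewrite /Block /= nullable_Gt lasts_Gt. Qed.

Lemma fol_Block t x y : fol (Block t) x y =
  [|| fol (Pre t) x y, (x \in lasts (Pre t)) && (y == H t), fol (Gt t) x y |
      (x == H t) && (y \in firsts (Gt t))].
Proof. by rewrite /Block /= !inE -!orbA. Qed.

Lemma mem_flatten_map2 (U : Type) (f : regex Role -> seq Role) (g : U -> regex Role) (l : seq U) x :
  (x \in flatten (map f (map g l))) = has (fun u => x \in f (g u)) l.
Proof. by elim: l => //= u l IH; rewrite mem_cat IH. Qed.

Definition fstR y := [\/ exists2 d, d \in ds & y = W d 0, exists2 t, t \in init A & y = H t | y = Dl].
Definition lstE x := (exists2 d, d \in ds & x = X d (Ld d)) \/ (exists2 t, t \in final A & x = H t).

Lemma firsts_R' : firsts R' = firsts E ++ [:: Dl].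
Proof. by []. Qed.

Lemma firstsR y : y \in firsts R' <-> fstR y.
Proof.
rewrite firsts_R' /E firsts_bigAlt mem_cat mem_flatten_map2 inE.
split.
  case/orP => [/hasP [t _] | /eqP ->]; last by apply: Or33.
  rewrite firsts_Block mem_cat => /orP [/mapP [d]|].
    by rewrite mem_filter => /andP [_ dd] ->; apply: Or31; exists d.
  case It: (t \in init A); rewrite // inE => /eqP ->; by apply: Or32; exists t.
case=> [[d dd ->]|[t tI ->]|->]; last by rewrite eqxx orbT.
  apply/orP; left; apply/hasP; exists d.2; first by rewrite mem_enum.
  by rewrite firsts_Block mem_cat; apply/orP; left; apply/mapP; exists d; rewrite // mem_filter eqxx.
apply/orP; left; apply/hasP; exists t; first by rewrite mem_enum.
by rewrite firsts_Block mem_cat tI inE eqxx orbT.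
Qed.

Lemma lastsE x : x \in lasts E <-> lstE x.
Proof.
rewrite /E lasts_bigAlt mem_flatten_map2.
split.
  case/hasP => [t _].
  rewrite lasts_Block mem_cat => /orP [/mapP [d]|].
    by rewrite mem_filter => /andP [_ dd] ->; left; exists d.
  case It: (t \in final A); rewrite // inE => /eqP ->; by right; exists t.
case=> [[d dd ->]|[t tI ->]].
  apply/hasP; exists d.1.1; first by rewrite mem_enum.
  by rewrite lasts_Block mem_cat; apply/orP; left; apply/mapP; exists d; rewrite // mem_filter eqxx.
apply/hasP; exists t; first by rewrite mem_enum.
by rewrite lasts_Block mem_cat tI inE eqxx orbT.
Qed.

Lemma folR'_eq x y : fol R' x y = fol E x y || (x \in lasts E) && (y \in firsts R').
Proof.
rewrite firsts_R' /R' /= !mem_cat !inE.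
by case: (fol E x y); case: (x \in lasts E); case: (y \in firsts E).
Qed.

Lemma fol_E x y : fol E x y = has (fun t => fol (Block t) x y) (enum Q).
Proof. by rewrite /E fol_bigAlt has_map. Qed.

Definition folR x y :=
 [\/ exists d k, [/\ d \in ds, k < idx d, x = W d k & y = W d k.+1],
     exists2 d, d \in ds & x = W d (idx d) /\ y = H d.2,
     exists2 d, d \in ds & x = H d.1.1 /\ y = X d 0 |
     (exists d k, [/\ d \in ds, k < Ld d, x = X d k & y = X d k.+1]) \/
     (lstE x /\ fstR y)].

Lemma folRP x y : fol R' x y <-> folR x y.
Proof.
rewrite folR'_eq; split.
  case/orP => [| /andP [/lastsE Hx /firstsR Hy]]; last by apply: Or44; right.
  rewrite fol_E => /hasP [t _]; rewrite fol_Block => /or4P [].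
  - rewrite fol_Pre => /hasP [d]; rewrite mem_filter => /andP [_ dd] /hasP [k].
    rewrite mem_iota => /andP [_ kl] /andP [/eqP -> /eqP ->].
    by apply: Or41; exists d, k; split.
  - case/andP; rewrite lasts_Pre => /mapP [d]; rewrite mem_filter => /andP [/eqP dt dd] -> /eqP ->.
    by apply: Or42; exists d; rewrite ?dt.
  - rewrite fol_Gt => /hasP [d]; rewrite mem_filter => /andP [_ dd] /hasP [k].
    rewrite mem_iota => /andP [_ kl] /andP [/eqP -> /eqP ->].
    by apply: Or44; left; exists d, k; split.
  - case/andP => /eqP ->; rewrite firsts_Gt => /mapP [d]; rewrite mem_filter => /andP [/eqP dt dd] ->.
    by apply: Or43; exists d; rewrite ?dt.
case=> [||| []].
- case=> d [k [dd kl -> ->]]; apply/orP; left; rewrite fol_E; apply/hasP; exists d.2.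
    by rewrite mem_enum.
  rewrite fol_Block fol_Pre; apply/or4P; apply: Or41; apply/hasP; exists d.
    by rewrite mem_filter eqxx.
  by apply/hasP; exists k; rewrite ?mem_iota ?eqxx.
- case=> d dd [-> ->]; apply/orP; left; rewrite fol_E; apply/hasP; exists d.2.
    by rewrite mem_enum.
  rewrite fol_Block lasts_Pre; apply/or4P; apply: Or42; rewrite eqxx andbT.
  by apply/mapP; exists d; rewrite // mem_filter eqxx.
- case=> d dd [-> ->]; apply/orP; left; rewrite fol_E; apply/hasP; exists d.1.1.
    by rewrite mem_enum.
  rewrite fol_Block firsts_Gt; apply/or4P; apply: Or44; rewrite eqxx /=.
  by apply/mapP; exists d; rewrite // mem_filter eqxx.
- case=> d [k [dd kl -> ->]]; apply/orP; left; rewrite fol_E; apply/hasP; exists d.1.1.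
    by rewrite mem_enum.
  rewrite fol_Block fol_Gt; apply/or4P; apply: Or43; apply/hasP; exists d.
    by rewrite mem_filter eqxx.
  by apply/hasP; exists k; rewrite ?mem_iota ?eqxx.
- by case=> /lastsE -> /firstsR ->; rewrite orbT.
Qed.


Definition redge (o : option Role) (y : Role) : bool :=
  if o is Some x then fol R' x y else y \in firsts R'.
Fixpoint rvalid (o : option Role) (ys : seq Role) : bool :=
  if ys is y :: ys' then redge o y && rvalid (Some y) ys' else true.

Lemma rvalid_cons o y ys : rvalid o (y :: ys) = redge o y && rvalid (Some y) ys.
Proof. by []. Qed.
Lemma redge_some x y : redge (Some x) y = fol R' x y.
Proof. by []. Qed.

Definition lam (a : S) : seq SB := inl a :: nseq m.+1 cc ++ [:: hh].
Definition tpath d : seq Role :=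
  [seq X d q | q <- iota 0 (Ld d).+1] ++ [seq W d q | q <- iota 0 (idx d).+1] ++ [:: H d.2].

Lemma idx_lt d : d \in ds -> idx d < m.
Proof. by move=> dd; rewrite /idx /m index_mem. Qed.

Lemma idx_inj d d' : d \in ds -> d' \in ds -> idx d = idx d' -> d = d'.
Proof.
move=> dd dd' E; rewrite -(nth_index d dd) -(nth_index d dd').
by rewrite /idx in E; rewrite E.
Qed.

Lemma Wwalk j : forall d k ys, d \in ds -> k <= idx d -> rvalid (Some (W d k)) ys ->
  map letter ys = nseq j cc ++ [:: hh] ->
  j + k = idx d /\ ys = [seq W d i | i <- iota k.+1 j] ++ [:: H d.2].
Proof.
elim: j => [|j IH] d k [|y ys] // dd kl /= /andP [/folRP F V] [Ly Lys].
  case: ys Lys V => // _ _.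
  case: F => [[d' [k' [dd' kl' E1 E2]]] | [d' dd' [E1 E2]] | [d' dd' [E1 E2]] |
              [[d' [k' [dd' kl' E1 E2]]] | [[[d'' _ Ey]|[t _ Ey]] Fy]]] //; try by subst y.
  by case: E1 => Ed Ek; subst d' y; rewrite Ek.
case: F => [[d' [k' [dd' kl' E1 E2]]] | [d' dd' [E1 E2]] | [d' dd' [E1 E2]] |
            [[d' [k' [dd' kl' E1 E2]]] | [[[d'' _ Ey]|[t _ Ey]] Fy]]] //; try by subst y.
case: E1 => Ed Ek; subst d' k' y.
have [IH1 IH2] := IH d k.+1 ys dd kl' V Lys.
by split; [rewrite addSnnS|rewrite IH2].
Qed.

Lemma Xwalk i : forall d ys, d \in ds -> i <= Ld d -> rvalid (Some (X d (Ld d - i))) ys ->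
  map letter ys = nseq (i + idx d).+1 cc ++ [:: hh] ->
  ys = [seq X d q | q <- iota (Ld d - i).+1 i] ++ [seq W d q | q <- iota 0 (idx d).+1] ++ [:: H d.2].
Proof.
elim: i => [|i IH] d [|y ys] // dd il /= /andP [/folRP F V] [Ly Lys].
  rewrite subn0 in F.
  case: F => [[d' [k' [dd' kl' E1 E2]]] | [d' dd' [E1 E2]] | [d' dd' [E1 E2]] |
              [[d' [k' [dd' kl' E1 E2]]] | [_ [[d' dd' Ey]|[t _ Ey]|Ey]]]] //; try by subst y.
  - by case: E1 => Ed Ek; subst d'; rewrite -Ek ltnn in kl'.
  - subst y.
    have [E1 E2] := Wwalk dd' (leq0n _) V Lys.
    by rewrite !add0n addn0 in E1; rewrite E2 add0n E1 (idx_inj dd dd' E1).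
case: F => [[d' [k' [dd' kl' E1 E2]]] | [d' dd' [E1 E2]] | [d' dd' [E1 E2]] |
            [[d' [k' [dd' kl' E1 E2]]] | [[[d'' _ Ey]|[t _ Ey]] Fy]]] //.
- case: E1 => Ed Ek; subst d' k' y.
  have Ei : (Ld d - i.+1).+1 = Ld d - i by lia.
  rewrite Ei in V; rewrite ?addSn in Lys.
  by rewrite (IH d ys dd (ltnW il) V Lys) Ei.
- case: Ey => Ed Ek; subst d''; lia.
Qed.

Lemma transPath s a ys : rvalid (Some (H s)) ys -> map letter ys = lam a ->
  exists2 d, d \in ds & [/\ d.1.1 = s, d.1.2 = a & ys = tpath d].
Proof.
case: ys => [|y ys] //= /andP [/folRP F V] [Ly Lys].
case: F => [[d' [k' [dd' kl' E1 E2]]] | [d' dd' [E1 E2]] | [d dd [E1 E2]] |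
            [[d' [k' [dd' kl' E1 E2]]] | [_ [[d' dd' Ey]|[t _ Ey]|Ey]]]] //; try by subst y.
subst y; case: E1 => Es; exists d => //; split => //.
  by case: Ly.
have Ld0 : Ld d - Ld d = 0 by rewrite subnn.
rewrite -Ld0 in V.
have Em : m = Ld d + idx d by have := idx_lt dd; rewrite /Ld; lia.
rewrite Em in Lys.
by rewrite (Xwalk dd (leqnn _) V Lys) Ld0.
Qed.

Lemma initPath ys : rvalid None ys -> map letter ys = [:: hh] ->
  exists2 t, t \in init A & ys = [:: H t].
Proof.
case: ys => [|y [|z ys]] //= /andP [/firstsR F _] [Ly].
by case: F => [[d _ Ey]|[t tI Ey]|Ey]; subst y => //; exists t.
Qed.

Lemma finalPath s ys : rvalid (Some (H s)) ys -> map letter ys = [:: dl] ->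
  s \in final A /\ ys = [:: Dl].
Proof.
case: ys => [|y [|z ys]] //= /andP [/folRP F _] [Ly].
case: F => [[d' [k' [dd' kl' E1 E2]]] | [d' dd' [E1 E2]] | [d dd [E1 E2]] |
            [[d' [k' [dd' kl' E1 E2]]] | [[[d'' _ Ey]|[t tF Ey]] Fy]]] //; try by subst y.
case: Ey => ->; split => //.
by case: Fy => [[d _ Ey]|[t' _ Ey]|Ey]; subst y.
Qed.

Lemma chain_valid (C : nat -> Role) k n z :
  (forall i, k <= i < k + n -> fol R' (C i) (C i.+1)) ->
  rvalid (Some (C (k + n))) z -> rvalid (Some (C k)) (map C (iota k.+1 n) ++ z).
Proof.
elim: n k => [|n IH] k Hf; first by rewrite addn0.
move=> V; rewrite rvalid_cons redge_some Hf; last by lia.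
by apply: IH => [i Hi|]; [apply: Hf; lia|rewrite addSnnS].
Qed.

Lemma tpath_valid d : d \in ds -> rvalid (Some (H d.1.1)) (tpath d).
Proof.
move=> dd; rewrite /tpath.
have -> : [seq X d q | q <- iota 0 (Ld d).+1] = X d 0 :: [seq X d q | q <- iota 1 (Ld d)] by [].
have -> : [seq W d q | q <- iota 0 (idx d).+1] = W d 0 :: [seq W d q | q <- iota 1 (idx d)] by [].
rewrite cat_cons rvalid_cons redge_some; apply/andP; split.
  by apply/folRP; apply: Or43; exists d.
apply: chain_valid.
  by move=> i Hi; apply/folRP; apply: Or44; left; exists d, i; split => //; lia.
rewrite add0n rvalid_cons redge_some; apply/andP; split.
  apply/folRP; apply: Or44; right; split; first by left; exists d.
  by apply: Or31; exists d.
apply: chain_valid.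
  by move=> i Hi; apply/folRP; apply: Or41; exists d, i; split => //; lia.
rewrite add0n rvalid_cons redge_some andbT; apply/folRP; apply: Or42; by exists d.
Qed.

Lemma init_valid t : t \in init A -> rvalid None [:: H t].
Proof. by move=> tI; rewrite rvalid_cons andbT; apply/firstsR; apply: Or32; exists t. Qed.

Lemma final_valid s : s \in final A -> rvalid (Some (H s)) [:: Dl].
Proof.
move=> sF; rewrite rvalid_cons redge_some andbT; apply/folRP; apply: Or44; right; split.
  by right; exists s.
exact: Or33.
Qed.


Definition ownW (x : Role) : option D3 := if x is inl (inr (d, _)) then Some d else None.
Definition ownX (x : Role) : option D3 := if x is inl (inl (inr (d, _))) then Some d else None.
Definition ownB (x : Role) : option Q :=
  match x with
  | inl (inl (inl t)) => Some t
  | inl (inl (inr (d, _))) => Some d.1.1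
  | inl (inr (d, _)) => Some d.2
  | inr _ => None
  end.

Lemma atoms_Pre t : atoms (Pre t) =
  flatten [seq [seq W d k | k <- iota 0 (idx d).+1] | d <- [seq d <- ds | d.2 == t]].
Proof.
rewrite /Pre atoms_bigAlt map_cat flatten_cat -map_comp.
rewrite (eq_map (g := fun d => [seq W d k | k <- iota 0 (idx d).+1])); last first.
  by move=> d; rewrite /= chain_atoms.
by case: (t \in init A); rewrite /= cats0.
Qed.

Lemma atoms_Gt t : atoms (Gt t) =
  flatten [seq [seq X d k | k <- iota 0 (Ld d).+1] | d <- [seq d <- ds | d.1.1 == t]].
Proof.
rewrite /Gt atoms_bigAlt map_cat flatten_cat -map_comp.
rewrite (eq_map (g := fun d => [seq X d k | k <- iota 0 (Ld d).+1])); last first.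
  by move=> d; rewrite /= chain_atoms.
by case: (t \in final A); rewrite /= cats0.
Qed.

Lemma mem_atoms_Pre t x : x \in atoms (Pre t) ->
  exists d k, [/\ d \in ds, d.2 = t, k <= idx d & x = W d k].
Proof.
rewrite atoms_Pre mem_flatten_map => /hasP [d]; rewrite mem_filter => /andP [/eqP dt dd].
by case/mapP => k; rewrite mem_iota => /andP [_ kl] ->; exists d, k; split.
Qed.

Lemma mem_atoms_Gt t x : x \in atoms (Gt t) ->
  exists d k, [/\ d \in ds, d.1.1 = t, k <= Ld d & x = X d k].
Proof.
rewrite atoms_Gt mem_flatten_map => /hasP [d]; rewrite mem_filter => /andP [/eqP dt dd].
by case/mapP => k; rewrite mem_iota => /andP [_ kl] ->; exists d, k; split.
Qed.

Lemma uniq_atoms_Pre t : uniq (atoms (Pre t)).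
Proof.
rewrite atoms_Pre; apply: (@uniq_flatten_own _ _ _ ownW).
- by rewrite filter_uniq // enum_uniq.
- by move=> d _; rewrite map_inj_uniq ?iota_uniq // => k k' [].
- by move=> d x _ /mapP [k _ ->].
Qed.

Lemma uniq_atoms_Gt t : uniq (atoms (Gt t)).
Proof.
rewrite atoms_Gt; apply: (@uniq_flatten_own _ _ _ ownX).
- by rewrite filter_uniq // enum_uniq.
- by move=> d _; rewrite map_inj_uniq ?iota_uniq // => k k' [].
- by move=> d x _ /mapP [k _ ->].
Qed.

Lemma atoms_Block t : atoms (Block t) = atoms (Pre t) ++ H t :: atoms (Gt t).
Proof. by rewrite /Block /= -catA. Qed.

Lemma mem_atoms_Block t x : x \in atoms (Block t) -> ownB x = Some t.
Proof.
rewrite atoms_Block mem_cat inE => /or3P [/mem_atoms_Pre|/eqP ->|/mem_atoms_Gt] //.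
- by case=> d [k [_ <- _ ->]].
- by case=> d [k [_ <- _ ->]].
Qed.

Lemma uniq_atoms_Block t : uniq (atoms (Block t)).
Proof.
rewrite atoms_Block cat_uniq /= uniq_atoms_Pre uniq_atoms_Gt andbT.
apply/and3P; split => //.
- rewrite negb_or; apply/andP; split.
    by apply/negP => /mem_atoms_Pre [d [k [_ _ _ E1]]].
  apply/hasP => [[x /mem_atoms_Gt [d [k [_ _ _ ->]]]]].
  by case/mem_atoms_Pre => d' [k' [_ _ _ E1]].
- by apply/negP => /mem_atoms_Gt [d [k [_ _ _ E1]]].
Qed.

Lemma atoms_E : atoms E = flatten (map (fun t => atoms (Block t)) (enum Q)).
Proof. by rewrite /E atoms_bigAlt -map_comp. Qed.

Lemma uniq_atoms_R' : uniq (atoms R').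
Proof.
rewrite /R' /= cat_uniq /= andbT; apply/andP; split.
  rewrite atoms_E; apply: (@uniq_flatten_own _ _ _ ownB).
  - exact: enum_uniq.
  - by move=> t _; apply: uniq_atoms_Block.
  - by move=> t x _; apply: mem_atoms_Block.
rewrite orbF atoms_E mem_flatten_map; apply/hasP => [[t _]] /mem_atoms_Block.
by [].
Qed.

Definition validRole x := [\/ exists t, x = H t,
  exists d k, [/\ d \in ds, k <= Ld d & x = X d k],
  exists d k, [/\ d \in ds, k <= idx d & x = W d k] | x = Dl].

Lemma mem_atoms_R' x : x \in atoms R' -> validRole x.
Proof.
rewrite /R' /= mem_cat inE => /orP [|/eqP ->]; last exact: Or44.
rewrite atoms_E mem_flatten_map => /hasP [t _].
rewrite atoms_Block mem_cat inE => /or3P [/mem_atoms_Pre|/eqP ->|/mem_atoms_Gt].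
- by case=> d [k [dd _ kl ->]]; apply: Or43; exists d, k.
- by apply: Or41; exists t.
- by case=> d [k [dd _ kl ->]]; apply: Or42; exists d, k.
Qed.


Lemma nstars_Pre t : nstars (Pre t) = 0.
Proof.
rewrite /Pre nstars_bigAlt map_cat sumn_cat.
have -> : sumn (map (@nstars _) (map Wc [seq d <- ds | d.2 == t])) = 0.
  by elim: [seq d <- ds | d.2 == t] => //= d l ->; rewrite chain_nstars.
by case: (t \in init A).
Qed.

Lemma nstars_Gt t : nstars (Gt t) = 0.
Proof.
rewrite /Gt nstars_bigAlt map_cat sumn_cat.
have -> : sumn (map (@nstars _) (map Xc [seq d <- ds | d.1.1 == t])) = 0.
  by elim: [seq d <- ds | d.1.1 == t] => //= d l ->; rewrite chain_nstars.
by case: (t \in final A).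
Qed.

Lemma nstars_R' : nstars R' = 1.
Proof.
rewrite /R' /= addn0; congr (_.+1); rewrite /E nstars_bigAlt.
by elim: (enum Q) => //= t l ->; rewrite nstars_Pre nstars_Gt.
Qed.

Lemma neps_Pre t : neps (Pre t) <= 1.
Proof.
rewrite /Pre neps_bigAlt; case: nilp => //; rewrite map_cat sumn_cat.
have -> : sumn (map (@neps _) (map Wc [seq d <- ds | d.2 == t])) = 0.
  by elim: [seq d <- ds | d.2 == t] => //= d l ->; rewrite chain_neps.
by case: (t \in init A).
Qed.

Lemma neps_Gt t : neps (Gt t) <= 1.
Proof.
rewrite /Gt neps_bigAlt; case: nilp => //; rewrite map_cat sumn_cat.
have -> : sumn (map (@neps _) (map Xc [seq d <- ds | d.1.1 == t])) = 0.
  by elim: [seq d <- ds | d.1.1 == t] => //= d l ->; rewrite chain_neps.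
by case: (t \in final A).
Qed.

Lemma neps_R' : neps R' <= 2 * #|Q| + 1.
Proof.
rewrite /R' /= addn0 /E neps_bigAlt; case: nilp => //; first lia.
rewrite cardE; elim: (enum Q) => //= t l IH.
have := neps_Pre t; have := neps_Gt t; lia.
Qed.

Lemma m_card : m = #|trans A|.
Proof. by rewrite /m /ds cardE. Qed.

Lemma size_atoms_R' : size (atoms R') <= #|Q| + 2 * (m * m.+1) + 1.
Proof.
pose U := map H (enum Q) ++ [seq X d k | d <- ds, k <- iota 0 m.+1] ++
          [seq W d k | d <- ds, k <- iota 0 m.+1] ++ [:: Dl].
have -> : #|Q| + 2 * (m * m.+1) + 1 = size U.
  by rewrite /U !size_cat !size_allpairs size_map size_iota -cardE /= -/m; lia.
apply: uniq_leq_size; first exact: uniq_atoms_R'.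
move=> x /mem_atoms_R' [[t ->]|[d [k [dd kl ->]]]|[d [k [dd kl ->]]]|->]; rewrite /U !mem_cat.
- by rewrite map_f ?mem_enum.
- have kl' : k < m.+1 by move: kl; rewrite /Ld; lia.
  by rewrite (allpairs_f (fun d k => X d k)) ?orbT // mem_iota.
- have kl' : k < m.+1 by have := idx_lt dd; lia.
  by rewrite (allpairs_f (fun d k => W d k)) ?orbT // mem_iota.
- by rewrite inE eqxx !orbT.
Qed.


Definition Fp : seq Role := [seq W d 0 | d <- ds] ++ map H (enum Q) ++ [:: Dl].
Definition Lp : seq Role := [seq X d (Ld d) | d <- ds] ++ map H (enum Q).
Definition EL : seq (option Role * Role) :=
  [seq (None, y) | y <- Fp] ++ [seq (Some x, y) | x <- Lp, y <- Fp] ++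
  [seq (Some (W d k), W d k.+1) | d <- ds, k <- iota 0 m] ++
  [seq (Some (W d (idx d)), H d.2) | d <- ds] ++
  [seq (Some (H d.1.1), X d 0) | d <- ds] ++
  [seq (Some (X d k), X d k.+1) | d <- ds, k <- iota 0 m].

Lemma fstR_Fp y : fstR y -> y \in Fp.
Proof.
case=> [[d dd ->]|[t _ ->]|->]; rewrite /Fp !mem_cat.
- by rewrite (map_f (fun d => W d 0)).
- by rewrite map_f ?mem_enum ?orbT.
- by rewrite inE eqxx !orbT.
Qed.

Lemma lstE_Lp x : lstE x -> x \in Lp.
Proof.
case=> [[d dd ->]|[t _ ->]]; rewrite /Lp !mem_cat.
- by rewrite (map_f (fun d => X d (Ld d))).
- by rewrite map_f ?mem_enum ?orbT.
Qed.

Lemma redge_EL o y : redge o y -> (o, y) \in EL.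
Proof.
rewrite /EL !mem_cat; case: o => [x|] /=; last first.
  by move=> /firstsR /fstR_Fp Hy; rewrite (map_f (fun y => (None, y))).
case/folRP => [[d [k [dd kl -> ->]]]|[d dd [-> ->]]|[d dd [-> ->]]|[[d [k [dd kl -> ->]]]|[Hx Hy]]].
- have km : k \in iota 0 m by rewrite mem_iota /=; have := idx_lt dd; lia.
  by rewrite (allpairs_f (fun d k => (Some (W d k), W d k.+1))) ?orbT.
- by rewrite (map_f (fun d => (Some (W d (idx d)), H d.2))) ?orbT.
- by rewrite (map_f (fun d => (Some (H d.1.1), X d 0))) ?orbT.
- have km : k \in iota 0 m by rewrite mem_iota /=; move: kl; rewrite /Ld; lia.
  by rewrite (allpairs_f (fun d k => (Some (X d k), X d k.+1))) ?orbT.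
- by rewrite (allpairs_f (fun x y => (Some x, y))) ?orbT ?lstE_Lp ?fstR_Fp.
Qed.

Lemma size_EL : size EL <= 3 * (m + #|Q| + 1) ^ 2.
Proof.
rewrite /EL !size_cat !size_allpairs !size_map /Fp /Lp !size_cat !size_map size_iota /= -/m.
have hn : size (Finite.enum Q) = #|Q| by rewrite cardE enumT.
rewrite hn; move: #|Q| m => n p; rewrite expnS expn1; nia.
Qed.


Definition R := rmap letter R'.
Local Notation GP := (gl_pos R).

Lemma szR : size (atoms R) = size (atoms R').
Proof. by rewrite /R atoms_rmap size_map. Qed.

Lemma Dl_atoms : Dl \in atoms R'.
Proof. by rewrite /R' /= mem_cat inE eqxx orbT. Qed.

Lemma szpos : 0 < size (atoms R).
Proof. by rewrite szR; case: (atoms R') Dl_atoms. Qed.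

Definition p0 : GP := Ordinal szpos.
Definition rl (a : GP) : Role := nth Dl (atoms R') a.
Definition pr (y : Role) : GP := insubd p0 (index y (atoms R')).

Lemma ltR (a : GP) : a < size (atoms R').
Proof. by rewrite -szR ltn_ord. Qed.

Lemma rl_atoms a : rl a \in atoms R'.
Proof. exact: mem_nth (ltR a). Qed.

Lemma posn_rl a : index (rl a) (atoms R') = a.
Proof. by rewrite /rl index_uniq ?ltR ?uniq_atoms_R'. Qed.

Lemma rlK a : pr (rl a) = a.
Proof. by apply: val_inj; rewrite /pr val_insubd posn_rl ltn_ord. Qed.

Lemma prK y : y \in atoms R' -> rl (pr y) = y.
Proof.
move=> yA; rewrite /rl /pr val_insubd.
have hi : index y (atoms R') < size (atoms R) by rewrite szR index_mem.
by rewrite hi nth_index.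
Qed.

Lemma posn_inj : {in atoms R' &, injective (fun x => index x (atoms R'))}.
Proof. by move=> x y xs ys E; rewrite -(nth_index Dl xs) E nth_index. Qed.

Lemma linR : linearise R = rmap (fun x => index x (atoms R')) R'.
Proof. exact: (lin_rmap letter uniq_atoms_R' 0). Qed.

Lemma glfirst a : @gl_first _ R a = (rl a \in firsts R').
Proof.
have E : (nat_of_ord a \in firsts (linearise R)) = (rl a \in firsts R').
  rewrite linR firsts_rmap -{1}(posn_rl a) (mem_map_in posn_inj) ?rl_atoms //.
  by move=> z /firsts_atoms.
by rewrite /gl_first -E; apply/asboolP/idP => /firstsP.
Qed.

Lemma gllast a : @gl_last _ R a = (rl a \in lasts R').
Proof.
have E : (nat_of_ord a \in lasts (linearise R)) = (rl a \in lasts R').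
  rewrite linR lasts_rmap -{1}(posn_rl a) (mem_map_in posn_inj) ?rl_atoms //.
  by move=> z /lasts_atoms.
by rewrite /gl_last -E; apply/asboolP/idP => /lastsP.
Qed.

Lemma glfollow a b : @gl_follow _ R a b = fol R' (rl a) (rl b).
Proof.
have H1 := @fol_rmap _ _ (fun x => index x (atoms R')) (atoms R') R' (rl a) (rl b)
   posn_inj (fun z zz => zz) (rl_atoms a) (rl_atoms b).
rewrite /= !posn_rl in H1.
have E : fol (linearise R) a b = fol R' (rl a) (rl b) by rewrite linR; exact: H1.
by rewrite /gl_follow -E; apply/asboolP/idP => /folP.
Qed.

Lemma gleps : gl_eps R = false.
Proof.
rewrite /gl_eps; apply/asboolP => /nullableP.
by rewrite linR nullable_rmap.
Qed.

Lemma glbar b : @gl_bar _ R b = letter (rl b).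
Proof.
rewrite /gl_bar (tnth_nth (letter Dl)) /rl; have := ltR b.
have -> : tval (in_tuple (atoms R)) = atoms R by [].
by move: (nat_of_ord b) => k hk; rewrite /R atoms_rmap (nth_map Dl).
Qed.

Lemma gltrans p a q : ((p, a, q) \in trans (gl_full R)) =
  (if q is Some b then (a == letter (rl b)) && redge (omap rl p) (rl b) else false).
Proof.
by rewrite /gl_full inE; case: p q => [al|] [be|] //=; rewrite glbar ?glfirst ?glfollow.
Qed.

Lemma redge_atoms o y : redge o y -> y \in atoms R'.
Proof.
case: o => [x|]; first by rewrite redge_some => /fol_atoms/andP [].
exact: firsts_atoms.
Qed.

Lemma edgeG o y : redge o y -> aedge (gl_full R) (omap pr o) (Some (pr y)).
Proof.
move=> Hy; have yA := redge_atoms Hy.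
apply/existsP; exists (letter y); rewrite gltrans prK // eqxx /=.
case: o Hy => [x|] Hy; last by [].
rewrite [omap rl _]/= prK // .
by have /andP [] := fol_atoms (Hy : fol R' x y).
Qed.

Lemma validG o ys : rvalid o ys ->
  connect (aedge (gl_full R)) (omap pr o) (omap pr (last o (map Some ys))).
Proof.
elim: ys o => [|y ys IH] o /=; first by rewrite connect0.
move=> /andP [Hy V]; apply: connect_trans (connect1 (edgeG Hy)) _.
exact: (IH (Some y) V).
Qed.

Lemma validG_mid o ys y : rvalid o ys -> y \in ys ->
  connect (aedge (gl_full R)) (omap pr o) (Some (pr y)) /\
  connect (aedge (gl_full R)) (Some (pr y)) (omap pr (last o (map Some ys))).
Proof.
elim: ys o => // z ys IH o /= /andP [Hz V]; rewrite inE => /orP [/eqP ->|yy].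
  by split; [exact: connect1 (edgeG Hz)|exact: (validG V)].
have [h1 h2] := IH _ V yy; split => //.
exact: connect_trans (connect1 (edgeG Hz)) h1.
Qed.

Lemma last_tpath o d : last o (map Some (tpath d)) = Some (H d.2).
Proof. by rewrite /tpath !map_cat !last_cat. Qed.

Lemma pathA_G p i : path (aedge A) i p ->
  connect (aedge (gl_full R)) (Some (pr (H i))) (Some (pr (H (last i p)))).
Proof.
elim: p i => [|j p IH] i /=; first by rewrite connect0.
move=> /andP [/existsP [a Ha] P]; apply: connect_trans (IH j P).
have dd : (i, a, j) \in ds by rewrite mem_ds.
have := validG (tpath_valid dd); by rewrite last_tpath.
Qed.

Lemma reachH t : connect (aedge (gl_full R)) None (Some (pr (H t))) /\
                 connect (aedge (gl_full R)) (Some (pr (H t))) (Some (pr Dl)).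
Proof.
have /andP [/existsP [i /andP [iI /connectP [p Hp Et]]] /existsP [f /andP [fF /connectP [p' Hp' Ef]]]] := trimA t.
have e1 : redge None (H i) by have := init_valid iI; rewrite rvalid_cons => /andP [].
have e2 : redge (Some (H f)) Dl by have := final_valid fF; rewrite rvalid_cons => /andP [].
split.
  apply: connect_trans (connect1 (edgeG e1)) _.
  by rewrite Et; apply: pathA_G.
apply: connect_trans (connect1 (edgeG e2)).
by rewrite Ef; apply: pathA_G.
Qed.

Lemma allU q : useful (gl_full R) q.
Proof.
suff [h1 h2] : connect (aedge (gl_full R)) None q /\ connect (aedge (gl_full R)) q (Some (pr Dl)).
  apply/andP; split; apply/existsP; [exists None|exists (Some (pr Dl))]; rewrite !inE ?h1 ?h2 //=.
  by rewrite gllast prK ?Dl_atoms.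
have DlF : redge None Dl by apply/firstsR; apply: Or33.
case: q => [al|]; last by split; [exact: connect0|exact: connect1 (edgeG DlF)].
rewrite -(rlK al); have := mem_atoms_R' (rl_atoms al).
move: (rl al) => y [[t ->]|[d [k [dd kl ->]]]|[d [k [dd kl ->]]]|->].
- exact: reachH.
- have yin : X d k \in tpath d by rewrite /tpath !mem_cat map_f ?mem_iota.
  have [h1 h2] := validG_mid (tpath_valid dd) yin; rewrite last_tpath in h2.
  split; [apply: connect_trans (reachH _).1 h1|apply: connect_trans h2 (reachH _).2].
- have yin : W d k \in tpath d by rewrite /tpath !mem_cat (map_f (W d)) ?orbT ?mem_iota.
  have [h1 h2] := validG_mid (tpath_valid dd) yin; rewrite last_tpath in h2.
  split; [apply: connect_trans (reachH _).1 h1|apply: connect_trans h2 (reachH _).2].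
- by split; [exact: connect1 (edgeG DlF)|exact: connect0].
Qed.


Local Notation stB := (trim_state (gl_full R)).

Definition sB (o : option Role) : stB := exist _ (omap pr o) (allU _).
Definition rB (q : stB) : option Role := omap rl (val q).
Definition inAt (o : option Role) : bool := if o is Some y then y \in atoms R' else true.

Lemma rBK q : sB (rB q) = q.
Proof. by case: q => [[a|] Hq]; apply: val_inj; rewrite /rB //= rlK. Qed.

Lemma sBK o : inAt o -> rB (sB o) = o.
Proof. by case: o => [y|] //= yA; rewrite /rB /= prK. Qed.

Lemma H_atoms t : H t \in atoms R'.
Proof.
rewrite /R' /= mem_cat atoms_E mem_flatten_map; apply/orP; left.
by apply/hasP; exists t; rewrite ?mem_enum // atoms_Block mem_cat inE eqxx orbT.
Qed.

Lemma transB q1 a q2 : ((q1, a, q2) \in trans (Gl R)) =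
  (if rB q2 is Some y then (a == letter y) && redge (rB q1) y else false).
Proof. by rewrite /Gl /trim_part inE /= gltrans /rB; case: q2 => [[b|] h2]. Qed.

Lemma initB q : (q \in init (Gl R)) = (rB q == None).
Proof. by rewrite /Gl /trim_part inE /= inE /rB; case: q => [[b|] h2]. Qed.

Lemma finalB q : (q \in final (Gl R)) = (rB q == Some Dl).
Proof.
rewrite /Gl /trim_part inE /= inE /rB; case: q => [[al|] h] /=; last by rewrite gleps.
rewrite gllast /R' /= inE; by apply/eqP/eqP => [->|[]].
Qed.

Definition mkc (o : option Role) (ys : seq Role) : comp SB stB :=
  (sB o, [seq (letter y, sB (Some y)) | y <- ys]).

Lemma rvalid_atoms o ys : rvalid o ys -> all (mem (atoms R')) ys.
Proof.
elim: ys o => //= y ys IH o /andP [Hy V].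
by rewrite (redge_atoms Hy) (IH _ V).
Qed.

Lemma compB p s : all (fun t => t \in trans (Gl R)) (ctrans_from p s) <->
  exists ys, s = [seq (letter y, sB (Some y)) | y <- ys] /\ rvalid (rB p) ys.
Proof.
elim: s p => [|[a q] s IH] p /=.
  by split => // _; exists [::].
rewrite transB; split.
  case Eq: (rB q) => [y|] // /andP [/andP [/eqP -> Hy] /IH [ys [-> V]]].
  exists (y :: ys); split.
    by rewrite /= -Eq rBK.
  by rewrite rvalid_cons Hy -Eq V.
case=> [[|y ys] [E V]] //; case: E => -> -> Es; move: V; rewrite rvalid_cons => /andP [Hy V].
have yA := redge_atoms Hy.
rewrite sBK // eqxx Hy /=; apply/IH; exists ys; split => //.
by rewrite sBK.
Qed.

Lemma is_comp_mkc o ys : inAt o -> rvalid o ys -> is_comp (Gl R) (mkc o ys).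
Proof. by move=> Ho V; rewrite /is_comp /ctrans /=; apply/compB; exists ys; rewrite sBK. Qed.

Lemma comp_inv c : is_comp (Gl R) c -> exists2 ys, c = mkc (rB c.1) ys & rvalid (rB c.1) ys.
Proof.
case: c => p s; rewrite /is_comp /ctrans /= => /compB [ys [-> V]]; exists ys => //.
by rewrite /mkc rBK.
Qed.

Lemma clabel_mkc o ys : clabel (mkc o ys) = map letter ys.
Proof. by rewrite /clabel /mkc /= -map_comp. Qed.

Lemma csrc_mkc o ys : csrc (mkc o ys) = sB o.
Proof. by []. Qed.

Lemma snd_mkc o ys : map snd (mkc o ys).2 = map (fun y => sB (Some y)) ys.
Proof. by rewrite /mkc /= -map_comp. Qed.

Lemma mkc_roles o ys : all (mem (atoms R')) ys ->
  map (fun p => rB p.2) (mkc o ys).2 = map Some ys.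
Proof.
rewrite /mkc /= -map_comp; elim: ys => //= y ys IH /andP [yA A2].
by rewrite IH // sBK.
Qed.

Lemma mkc_inj o ys o' ys' : all (mem (atoms R')) ys -> all (mem (atoms R')) ys' ->
  mkc o ys = mkc o' ys' -> ys = ys'.
Proof.
move=> A1 A2 E; have := mkc_roles o A1; rewrite E mkc_roles //.
have Hs : injective (@Some Role) by move=> x y [].
by move/(inj_map Hs) ->.
Qed.

Definition nu (s : Q) : stB := sB (Some (H s)).

Lemma inimP q : (exists s, q = nu s) <-> (exists s, rB q = Some (H s)).
Proof.
split=> [[s ->]|[s E]]; exists s; first by rewrite /nu sBK //= H_atoms.
by rewrite -(rBK q) E.
Qed.

Lemma letters_X d a n : 0 < a -> map letter (map (X d) (iota a n)) = nseq n cc.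
Proof. by elim: n a => //= n IH [|a] // _; rewrite IH. Qed.

Lemma letters_W d a n : map letter (map (W d) (iota a n)) = nseq n cc.
Proof. by elim: n a => //= n IH a; rewrite IH. Qed.

Lemma letters_tpath d : d \in ds -> map letter (tpath d) = lam d.1.2.
Proof.
move=> dd; rewrite /tpath /lam !map_cat /= letters_X // letters_W /=.
have -> : cc :: nseq (idx d) cc ++ [:: hh] = nseq (idx d).+1 cc ++ [:: hh] by [].
have -> : [:: inl d.1.2, cc & nseq m cc ++ [:: hh]] = inl d.1.2 :: nseq m.+1 cc ++ [:: hh] by [].
rewrite catA -nseqD; congr (_ :: nseq _ _ ++ _); have := idx_lt dd; rewrite /Ld; lia.
Qed.

Definition xw d : seq Role := [seq X d q | q <- iota 0 (Ld d).+1] ++ [seq W d q | q <- iota 0 (idx d).+1].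

Lemma tpath_rcons d : tpath d = rcons (xw d) (H d.2).
Proof. by rewrite /tpath /xw -cats1 catA. Qed.

Lemma cinternal_mkc o ys z : cinternal (mkc o (rcons ys z)) = map (fun y => sB (Some y)) ys.
Proof. by rewrite /cinternal /= -map_comp map_rcons belast_rcons. Qed.

Lemma ctgt_mkc o ys y0 : o = Some y0 -> ctgt (mkc o ys) = sB (Some (last y0 ys)).
Proof. by move=> ->; rewrite /ctgt snd_mkc (last_map (fun y => sB (Some y))). Qed.


Local Notation Key := (Q + D3 + Q)%type.

Definition Kpair (o : option Role) (y : Role) : option Key :=
  match y with
  | inl (inl (inr (d, _))) => Some (inl (inr d))
  | inl (inr (d, _)) => Some (inl (inr d))
  | inl (inl (inl s)) =>
      match o with
      | None => Some (inl (inl s))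
      | Some (inl (inr (d, _))) => Some (inl (inr d))
      | _ => None
      end
  | inr _ => if o is Some (inl (inl (inl s))) then Some (inr s) else None
  end.

Definition Kt (t : stB * SB * stB) : option Key :=
  if rB t.2 is Some y then Kpair (rB t.1.1) y else None.

Definition Kst (q : stB) : option Key :=
  match rB q with
  | Some (inl (inl (inr (d, _)))) => Some (inl (inr d))
  | Some (inl (inr (d, _))) => Some (inl (inr d))
  | _ => None
  end.

Fixpoint rtrans (o : option Role) (ys : seq Role) : seq (option Role * Role) :=
  if ys is y :: ys' then (o, y) :: rtrans (Some y) ys' else [::].

Lemma ctrans_mkc o ys :
  ctrans (mkc o ys) = [seq (sB ab.1, letter ab.2, sB (Some ab.2)) | ab <- rtrans o ys].
Proof. by rewrite /ctrans /mkc /=; elim: ys o => //= y ys IH o; rewrite IH. Qed.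

Lemma rtrans_mem o ys ab : ab \in rtrans o ys ->
  (ab.1 = o \/ exists2 y, y \in ys & ab.1 = Some y) /\ ab.2 \in ys.
Proof.
elim: ys o => //= y ys IH o; rewrite inE => /orP [/eqP -> /=|/IH [[E|[z zs E]] zy]].
- by split; [left|rewrite mem_head].
- by split; [right; exists y; rewrite ?mem_head|rewrite inE zy orbT].
- by split; [right; exists z; rewrite // inE zs orbT|rewrite inE zy orbT].
Qed.

Lemma rtrans_cat o l1 l2 : rtrans o (l1 ++ l2) = rtrans o l1 ++ rtrans (last o (map Some l1)) l2.
Proof. by elim: l1 o => //= y l1 IH o; rewrite IH. Qed.

Lemma Kt_mkc o ys t k : inAt o -> all (mem (atoms R')) ys ->
  all (fun ab => Kpair ab.1 ab.2 == Some k) (rtrans o ys) ->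
  t \in ctrans (mkc o ys) -> Kt t = Some k.
Proof.
move=> Ho Ay K; rewrite ctrans_mkc => /mapP [ab abin ->].
have [H1 H2] := rtrans_mem abin.
rewrite /Kt /= prK; last exact: (allP Ay).
rewrite sBK; first exact/eqP/(allP K).
by case: H1 => [->|[y yy ->]] //=; apply: (allP Ay).
Qed.

Lemma lastW d o a n : last o (map Some (map (W d) (iota a n.+1))) = Some (W d (a + n)).
Proof.
by rewrite -addn1 iotaD !map_cat last_cat.
Qed.

Lemma Kpath d : d \in ds ->
  all (fun ab => Kpair ab.1 ab.2 == Some (inl (inr d))) (rtrans (Some (H d.1.1)) (tpath d)).
Proof.
move=> dd; rewrite /tpath !rtrans_cat !all_cat; apply/and3P; split.
- by elim: (iota 0 (Ld d).+1) (Some (H d.1.1)) => //= k l IH o; rewrite eqxx IH.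
- by elim: (iota 0 (idx d).+1) (last _ _) => //= k l IH o; rewrite eqxx IH.
- by rewrite lastW /= eqxx.
Qed.

Lemma Kint d q : d \in ds -> q \in cinternal (mkc (Some (H d.1.1)) (tpath d)) ->
  Kst q = Some (inl (inr d)).
Proof.
move=> dd; rewrite tpath_rcons cinternal_mkc => /mapP [y yin ->].
have Ay := rvalid_atoms (tpath_valid dd); rewrite tpath_rcons in Ay.
have yA : y \in atoms R' by apply: (allP Ay); rewrite mem_rcons inE yin orbT.
rewrite /Kst sBK //.
by move: yin; rewrite /xw mem_cat => /orP [] /mapP [k _ ->].
Qed.


Lemma coding : topological_coding A (Gl R).
Proof.
have Hs : forall s, inAt (Some (H s)) by move=> s; exact: H_atoms.
exists [:: hh], [:: dl], lam, nu; split.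
  split.
  - by move=> a a' [].
  - by [].
  - by move=> s s' /(congr1 rB); rewrite /nu !sBK // => [[]].
exists (fun s => mkc None [:: H s]), (fun d => mkc (Some (H d.1.1)) (tpath d)),
       (fun s => mkc (Some (H s)) [:: Dl]).
split; [split|split].
- split.
  + move=> s sI; split.
    * exact: is_comp_mkc (init_valid sI).
    * by rewrite csrc_mkc initB sBK.
    * by rewrite clabel_mkc.
  + move=> s s' _ _ E.
    have := mkc_inj _ _ E; rewrite /= !H_atoms => /(_ isT isT); by case.
  + move=> w [Cw Iw Lw]; have [ys Ew V] := comp_inv Cw.
    have E1 : rB w.1 = None by apply/eqP; rewrite -initB.
    rewrite E1 in Ew V; rewrite Ew clabel_mkc in Lw.
    have [t tI Ey] := initPath V Lw.
    by exists t => //; rewrite Ew Ey.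
- split.
  + move=> d dT; have dd : d \in ds by rewrite mem_ds.
    split.
    * exact: is_comp_mkc (tpath_valid dd).
    * by exists d.1.1.
    * by exists d.1.2; rewrite clabel_mkc letters_tpath.
  + move=> d d' dT dT' E.
    have dd : d \in ds by rewrite mem_ds.
    have dd' : d' \in ds by rewrite mem_ds.
    have := mkc_inj (rvalid_atoms (tpath_valid dd)) (rvalid_atoms (tpath_valid dd')) E.
    by rewrite /tpath /=; case.
  + move=> w [Cw [s Es] [a Lw]]; have [ys Ew V] := comp_inv Cw.
    have E1 : rB w.1 = Some (H s) by rewrite -[w.1]/(csrc w) Es /nu sBK.
    rewrite E1 in Ew V; rewrite Ew clabel_mkc in Lw.
    have [d dd [d1 d2 Ey]] := transPath V Lw.
    by exists d; [rewrite -mem_ds|rewrite Ew Ey d1].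
- split.
  + move=> s sF; split.
    * exact: is_comp_mkc (final_valid sF).
    * by exists s.
    * by rewrite clabel_mkc.
  + move=> s s' _ _ E.
    by have := congr1 (fun c => rB c.1) E; rewrite /= !sBK //; case.
  + move=> w [Cw [s Es] Lw]; have [ys Ew V] := comp_inv Cw.
    have E1 : rB w.1 = Some (H s) by rewrite -[w.1]/(csrc w) Es /nu sBK.
    rewrite E1 in Ew V; rewrite Ew clabel_mkc in Lw.
    have [sF Ey] := finalPath V Lw.
    by exists s => //; rewrite Ew Ey.
- move=> s sI; split; first by [].
  move=> q; rewrite /cnonlast /= inE => /eqP -> /inimP [s' E].
  by rewrite sBK in E.
- move=> s a t sT; have dd : (s, a, t) \in ds by rewrite mem_ds.
  split.
  + by [].
  + by rewrite clabel_mkc letters_tpath.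
  + by rewrite (ctgt_mkc _ (erefl _)) tpath_rcons last_rcons.
  + move=> q /(Kint dd) Kq /inimP [s' E]; by rewrite /Kst E in Kq.
- move=> s sF; split.
  + by rewrite (ctgt_mkc _ (erefl _)) /= finalB sBK //= Dl_atoms.
  + move=> q; rewrite /cnonfirst /= inE => /eqP -> /inimP [s' E].
    by rewrite sBK /= ?Dl_atoms in E.
move=> inimg c1 c2 H1 H2 Hsh; rewrite /inimg in H1 H2.
pose dec (k : Key) := match k with
  | inl (inl s) => mkc None [:: H s]
  | inl (inr d) => mkc (Some (H d.1.1)) (tpath d)
  | inr s => mkc (Some (H s)) [:: Dl] end.
have key : forall c,
  (exists2 s, s \in init A & c = mkc None [:: H s]) \/
  (exists2 d, d \in trans A & c = mkc (Some (H d.1.1)) (tpath d)) \/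
  (exists2 s, s \in final A & c = mkc (Some (H s)) [:: Dl]) ->
  exists k, [/\ c = dec k, forall t, t \in ctrans c -> Kt t = Some k &
                           forall q, q \in cinternal c -> Kst q = Some k].
  move=> c [[s sI ->]|[[d dT ->]|[s sF ->]]].
  - exists (inl (inl s)); split => // t.
    apply: Kt_mkc; [by []|rewrite /= andbT; exact: (Hs s)|by rewrite /= eqxx].
  - have dd : d \in ds by rewrite mem_ds.
    exists (inl (inr d)); split => //.
      move=> t; apply: Kt_mkc (Kpath dd) => //.
      exact: rvalid_atoms (tpath_valid dd).
    by move=> q; apply: Kint.
  - exists (inr s); split => // t.
    apply: Kt_mkc; [exact: Hs|rewrite /= andbT; exact: Dl_atoms|by rewrite /= eqxx].
have [k1 [E1 T1 I1]] := key _ H1; have [k2 [E2 T2 I2]] := key _ H2.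
case: Hsh => [[t [t1 t2]]|[q [q1 q2]]].
- by have := T1 _ t1; rewrite T2 // => [[Ek]]; rewrite E1 E2 Ek.
- by have := I1 _ q1; rewrite I2 // => [[Ek]]; rewrite E1 E2 Ek.
Qed.


Lemma card_transB : #|trans (Gl R)| <= 3 * (m + #|Q| + 1) ^ 2.
Proof.
pose f (t : stB * SB * stB) : option Role * Role := (rB t.1.1, odflt Dl (rB t.2)).
rewrite cardE -(size_map f); apply: leq_trans (size_EL); apply: uniq_leq_size.
  rewrite map_inj_in_uniq ?enum_uniq // => [[[p a] q]] [[p' a'] q'].
  rewrite !mem_enum !transB.
  case Eq: (rB q) => [y|] // /andP [/eqP Ea _]; case Eq': (rB q') => [y'|] // /andP [/eqP Ea' _].
  rewrite /f /= Eq Eq' => [[Ep Ey]].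
  have -> : p = p' by rewrite -(rBK p) -(rBK p') Ep.
  have -> : q = q' by rewrite -(rBK q) -(rBK q') Eq Eq' Ey.
  by rewrite Ea Ea' Ey.
move=> x /mapP [[[p a] q]]; rewrite mem_enum transB.
case Eq: (rB q) => [y|] // /andP [_ Hy] ->; rewrite /f /= Eq; exact: redge_EL.
Qed.

End Constr.

Theorem theoremC44 :
  exists C : nat,
    forall (S Q : finType) (A : automaton S Q), trim A ->
      exists (SB : finType) (R : regex SB),
        [/\ topological_coding A (Gl R),
            rsize R <= C * (#|trans A| + #|Q|).+1 ^ 2,
            nstars R = 1 &
            #|trans (Gl R)| <= C * (#|trans A| + #|Q|).+1 ^ 2].
Proof.
exists 10 => S Q A trimA.
exists (S + option bool)%type, (R A); split.
- exact: coding.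
- rewrite /R rsize_rmap.
  have h1 := rsize_eq (R' A); have h2 := size_atoms_R' A; have h3 := neps_R' A.
  have h4 := nstars_R' A; rewrite -(m_card A).
  move: h1 h2 h3 h4; move: (rsize (R' A)) (size (atoms (R' A))) (neps (R' A)) (nstars (R' A)) (m A) #|Q|.
  move=> a b c d mm n h1 h2 h3 h4; rewrite expnS expn1; nia.
- by rewrite /R nstars_rmap nstars_R'.
- apply: leq_trans (card_transB trimA) _; rewrite -(m_card A) addn1.
  by rewrite leq_mul2r; apply/orP; right.
Qed.
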